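(* Let $(X,\mathcal U)$ be a point-rotund quasi-uniform space. Then the following are equivalent: (1) $(X,\mathcal U)$ is uniformly semiregular; (2) $(X,\mathcal U)$ is uniformly regular; (3) $(X,\mathcal U)$ is uniformly completely regular. If moreover $(X,\mathcal U)$ is rotund, then (1)–(3) are equivalent to each of: (4) $\mathcal U$ is generated by a family of right-continuous premetrics; (5) $\mathcal U$ is generated by a family $\mathcal D$ of right-continuous and $\overline{\mathsf{dist}}$-continuous quasi-pseudometrics with $|\mathcal D|\le\chi(\mathcal U)$.
   Context: Entourages on $X$ are subsets of $X\times X$ containing the diagonal; $U\circ V=\{(x,z):\exists y\,((x,y)\in U,(y,z)\in V)\}$, $B(x;U)=\{y:(x,y)\in U\}$, $B(A;U)=\bigcup_{a\in A}B(a;U)$. A quasi-uniformity $\mathcal U$ on $X$ is a family of entourages closed under supersets, with any two members containing a common member, and such that each $U\in\mathcal U$ contains $V\circ V$ for some $V\in\mathcal U$. All topological notions refer to the topology $\tau_{\mathcal U}$ ($W$ open iff each $x\in W$ has $B(x;U)\subset W$ for some $U\in\mathcal U$); $\overline S$ is closure, $\overline S^\circ$ interior of closure. A base $\mathcal B\subset\mathcal U$ (each member of $\mathcal U$ contains a member of $\mathcal B$) is multiplicative if closed under $\circ$; point-rotund if $\overline{B(x;V)}\subset\overline{B(x;V\circ U)}^\circ$ for all $x$ and $U,V\in\mathcal B$; rotund if $B(\overline A;U)\subset\overline{B(A;W\circ U)}$ for all $A\subset X$, $U,W\in\mathcal B$. $(X,\mathcal U)$ is point-rotund (rotund) if $\mathcal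 U$ has a point-rotund (rotund) multiplicative base. $\chi(\mathcal U)$ is the least cardinality of a base of $\mathcal U$. A premetric is $d:X\times X\to[0,\infty)$ with $d(x,x)=0$; a quasi-pseudometric also satisfies the triangle inequality. $[d]_{<\varepsilon}=\{(x,y):d(x,y)<\varepsilon\}$, $B_d(x,\varepsilon)=\{y:d(x,y)<\varepsilon\}$, $B_d(A,\varepsilon)=\bigcup_{a\in A}B_d(a,\varepsilon)$. $d$ is $\mathcal U$-uniform if $[d]_{<\varepsilon}\in\mathcal U$ for all $\varepsilon>0$; right-continuous if $y\mapsto d(x,y)$ is continuous for each $x$; $\overline{\mathsf{dist}}$-continuous if for every non-empty $A\subset X$ the function $x\mapsto\inf\{\varepsilon>0:x\in\overline{B_d(A,\varepsilon)}\}$ is continuous. A family $\mathcal D$ of premetrics generates $\mathcal U$ if $\{[d]_{<\varepsilon}:d\in\mathcal D,\varepsilon>0\}$ is a subbase of $\mathcal U$ (finite intersections form a base). $(X,\mathcal U)$ is uniformly regular if for every $U\in\mathcal U$ there is $V\in\mathcal U$ with $\overline{B(x;V)}\subset B(x;U)$ for all $x$; uniformly semiregular if for every $U\in\mathcal U$ there is $V\in\mathcal U$ with $\overline{B(x;V)}^\circ\subset B(x;U)$ for all $x$; uniformly completely regular if for every $U\in\mathcal U$ there is a $\mathcal U$-uniform right-continuous premetric $d:X\times X\to[0,1]$ with $B_d(x,1)\subset B(x;U)$ for all $x$. *)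

(* Defs.v *)
From Stdlib Require Import Reals List.
Open Scope R_scope.

Section QU.
Variable X : Type.

Definition entourage := X -> X -> Prop.

Definition comp (U V : entourage) : entourage :=
  fun x z => exists y, U x y /\ V y z.

Definition ball (x : X) (U : entourage) : X -> Prop := fun y => U x y.
Definition ballS (A : X -> Prop) (U : entourage) : X -> Prop :=
  fun y => exists a, A a /\ U a y.

Definition subrel (U V : entourage) := forall x y, U x y -> V x y.
Definition subset (A B : X -> Prop) := forall x, A x -> B x.

Definition quasi_uniformity (Q : entourage -> Prop) : Prop :=
  Q (fun _ _ => True) /\
  (forall U, Q U -> forall x, U x x) /\
  (forall U V, Q U -> subrel U V -> Q V) /\
  (forall U V, Q U -> Q V -> exists W, Q W /\ subrel W U /\ subrel W V) /\
  (forall U, Q U -> exists V, Q V /\ subrel (comp V V) U).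

Definition qopen (Q : entourage -> Prop) (W : X -> Prop) : Prop :=
  forall x, W x -> exists U, Q U /\ subset (ball x U) W.

Definition closure (Q : entourage -> Prop) (S : X -> Prop) : X -> Prop :=
  fun x => forall W, qopen Q W -> W x -> exists y, W y /\ S y.

Definition interior (Q : entourage -> Prop) (S : X -> Prop) : X -> Prop :=
  fun x => exists W, qopen Q W /\ W x /\ subset W S.

Definition is_base (Q : entourage -> Prop) (B : entourage -> Prop) : Prop :=
  (forall U, B U -> Q U) /\ (forall U, Q U -> exists V, B V /\ subrel V U).

Definition multiplicative (B : entourage -> Prop) : Prop :=
  forall U V, B U -> B V -> B (comp U V).

Definition point_rotund_base (Q : entourage -> Prop) (B : entourage -> Prop) :=
  forall x U V, B U -> B V ->
    subset (closure Q (ball x V)) (interior Q (closure Q (ball x (comp V U)))).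

Definition rotund_base (Q : entourage -> Prop) (B : entourage -> Prop) :=
  forall (A : X -> Prop) U W, B U -> B W ->
    subset (ballS (closure Q A) U) (closure Q (ballS A (comp W U))).

Definition point_rotund (Q : entourage -> Prop) :=
  exists B, is_base Q B /\ multiplicative B /\ point_rotund_base Q B.

Definition rotund (Q : entourage -> Prop) :=
  exists B, is_base Q B /\ multiplicative B /\ rotund_base Q B.

(* |D| <= chi(U): D injects into every base of U (chi(U) is the least
   cardinality of a base, a minimum of cardinals). *)
Definition card_le_chi (Q : entourage -> Prop) (D : (X -> X -> R) -> Prop) :=
  forall B, is_base Q B ->
    exists f : {d | D d} -> {b | B b}, forall a b, f a = f b -> a = b.

Definition premetric (d : X -> X -> R) : Prop :=
  (forall x y, 0 <= d x y) /\ (forall x, d x x = 0).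

Definition quasi_pseudometric (d : X -> X -> R) : Prop :=
  premetric d /\ (forall x y z, d x z <= d x y + d y z).

Definition strict_ent (d : X -> X -> R) (e : R) : entourage :=
  fun x y => d x y < e.

Definition dball (d : X -> X -> R) (x : X) (e : R) : X -> Prop :=
  fun y => d x y < e.

Definition dballS (d : X -> X -> R) (A : X -> Prop) (e : R) : X -> Prop :=
  fun y => exists a, A a /\ d a y < e.

Definition uniform_premetric (Q : entourage -> Prop) (d : X -> X -> R) :=
  forall e, 0 < e -> Q (strict_ent d e).

Definition openR (O : R -> Prop) : Prop :=
  forall r, O r -> exists del, 0 < del /\ forall s, Rabs (s - r) < del -> O s.

Definition qcontinuous (Q : entourage -> Prop) (f : X -> R) : Prop :=
  forall O, openR O -> qopen Q (fun x => O (f x)).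

Definition right_continuous (Q : entourage -> Prop) (d : X -> X -> R) :=
  forall x, qcontinuous Q (fun y => d x y).

Definition is_inf (S : R -> Prop) (r : R) : Prop :=
  (forall s, S s -> r <= s) /\ (forall l, (forall s, S s -> l <= s) -> l <= r).

Definition distbar_continuous (Q : entourage -> Prop) (d : X -> X -> R) :=
  forall (A : X -> Prop), (exists a, A a) ->
    forall f : X -> R,
      (forall x, is_inf (fun e => 0 < e /\ closure Q (dballS d A e) x) (f x)) ->
      qcontinuous Q f.

(* D generates U: finite intersections of [d]_{<e} (d in D, e>0) form a base *)
Definition generates (Q : entourage -> Prop) (D : (X -> X -> R) -> Prop) :=
  forall W, Q W <->
    exists l : list ((X -> X -> R) * R),
      Forall (fun p => D (fst p) /\ 0 < snd p) l /\
      forall x y, Forall (fun p => fst p x y < snd p) l -> W x y.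

Definition uniformly_regular (Q : entourage -> Prop) :=
  forall U, Q U -> exists V, Q V /\
    forall x, subset (closure Q (ball x V)) (ball x U).

Definition uniformly_semiregular (Q : entourage -> Prop) :=
  forall U, Q U -> exists V, Q V /\
    forall x, subset (interior Q (closure Q (ball x V))) (ball x U).

Definition uniformly_completely_regular (Q : entourage -> Prop) :=
  forall U, Q U -> exists d : X -> X -> R,
    premetric d /\ (forall x y, d x y <= 1) /\
    uniform_premetric Q d /\ right_continuous Q d /\
    forall x, subset (dball d x 1) (ball x U).

End QU.

Arguments quasi_uniformity {X}.
Arguments point_rotund {X}.
Arguments rotund {X}.
Arguments uniformly_regular {X}.
Arguments uniformly_semiregular {X}.
Arguments uniformly_completely_regular {X}.
Arguments premetric {X}.
Arguments quasi_pseudometric {X}.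
Arguments right_continuous {X}.
Arguments distbar_continuous {X}.
Arguments generates {X}.
Arguments card_le_chi {X}.

(* Main.v *)
From Stdlib Require Import Reals Lra Lia List ZArith Classical ClassicalEpsilon FunctionalExtensionality PropExtensionality ProofIrrelevance.
From mathcomp Require ssreflect ssrbool ssrfun eqtype choice classical_sets boolp.
Require Import Defs.
Open Scope R_scope.


Arguments comp {X} : rename.
Arguments ball {X} : rename.
Arguments ballS {X} : rename.
Arguments subrel {X} : rename.
Arguments subset {X} : rename.
Arguments qopen {X} : rename.
Arguments closure {X} : rename.
Arguments interior {X} : rename.
Arguments is_base {X} : rename.
Arguments multiplicative {X} : rename.
Arguments point_rotund_base {X} : rename.
Arguments rotund_base {X} : rename.
Arguments strict_ent {X} : rename.
Arguments dball {X} : rename.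
Arguments dballS {X} : rename.
Arguments uniform_premetric {X} : rename.
Arguments qcontinuous {X} : rename.

Section Basics.
Variable X : Type.
Variable Q : entourage X -> Prop.
Hypothesis HQ : quasi_uniformity Q.

Lemma Q_true : Q (fun _ _ => True).
Proof. destruct HQ as [H _]; exact H. Qed.
Lemma Q_refl U x : Q U -> U x x.
Proof. destruct HQ as [_ [H _]]; intros; apply H; auto. Qed.
Lemma Q_mono U V : Q U -> subrel U V -> Q V.
Proof. destruct HQ as [_ [_ [H _]]]; intros; eapply H; eauto. Qed.
Lemma Q_inter U V : Q U -> Q V -> Q (fun x y => U x y /\ V x y).
Proof.
  destruct HQ as [_ [_ [_ [H _]]]]; intros HU HV.
  destruct (H U V HU HV) as [W [HW [H1 H2]]].
  apply Q_mono with W; auto. intros x y Hw; split; auto.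
Qed.
Lemma Q_half U : Q U -> exists V, Q V /\ subrel (comp V V) U.
Proof. destruct HQ as [_ [_ [_ [_ H]]]]; auto. Qed.

Lemma closure_incl S x : S x -> closure Q S x.
Proof. intros Sx W _ Wx; exists x; auto. Qed.
Lemma closure_mono (S T : X -> Prop) x : (forall y, S y -> T y) -> closure Q S x -> closure Q T x.
Proof. intros H C W HW Wx; destruct (C W HW Wx) as [y [? ?]]; exists y; auto. Qed.
Lemma closure_idem S x : closure Q (closure Q S) x -> closure Q S x.
Proof.
  intros C W HW Wx; destruct (C W HW Wx) as [y [Wy Cy]]; apply Cy; auto.
Qed.
Lemma not_closure_ball S x : ~ closure Q S x ->
  exists U, Q U /\ forall y, U x y -> ~ closure Q S y.
Proof.
  intros N. apply not_all_ex_not in N; destruct N as [W N].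
  apply imply_to_and in N; destruct N as [HW N].
  apply imply_to_and in N; destruct N as [Wx N].
  destruct (HW x Wx) as [U [HU Hs]]. exists U; split; [exact HU|].
  intros y Uy Cy. destruct (Cy W HW (Hs y Uy)) as [z [Wz Sz]].
  apply N; exists z; auto.
Qed.
Lemma interior_ball S x : interior Q S x -> exists U, Q U /\ forall y, U x y -> S y.
Proof.
  intros [W [HW [Wx HS]]]. destruct (HW x Wx) as [U [HU Hs]].
  exists U; split; auto.
Qed.

Definition cont_at (f : X -> R) (x : X) :=
  forall eps, 0 < eps -> exists U, Q U /\ forall y, U x y -> Rabs (f y - f x) < eps.

Lemma qcont_iff f : qcontinuous Q f <-> forall x, cont_at f x.
Proof.
  split.
  - intros Hc x eps He.
    set (O := fun r => Rabs (r - f x) < eps).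
    assert (HO : openR O).
    { intros r Hr; exists (eps - Rabs (r - f x)); split; unfold O in *. lra.
      intros s Hs. pose proof (Rabs_triang (s - r) (r - f x)).
      replace (s - r + (r - f x)) with (s - f x) in H by ring. lra. }
    destruct (Hc O HO x) as [U [HU Hs]].
    { unfold O; rewrite Rminus_eq_0, Rabs_R0; auto. }
    exists U; split; auto.
  - intros Hc O HO x Ox. destruct (HO _ Ox) as [del [Hd Hs]].
    destruct (Hc x del Hd) as [U [HU Hu]]. exists U; split; auto.
    intros y Uy; apply Hs; auto.
Qed.

Lemma cont_max f g x : cont_at f x -> cont_at g x -> cont_at (fun y => Rmax (f y) (g y)) x.
Proof.
  intros Hf Hg eps He. destruct (Hf eps He) as [U [HU Hu]].
  destruct (Hg eps He) as [V [HV Hv]].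
  exists (fun a b => U a b /\ V a b); split. apply Q_inter; auto.
  intros y [Uy Vy]. specialize (Hu y Uy); specialize (Hv y Vy).
  apply Rabs_def1; unfold Rmax; apply Rabs_def2 in Hu; apply Rabs_def2 in Hv;
  repeat destruct Rle_dec; lra.
Qed.
Lemma cont_min1 f x : cont_at f x -> cont_at (fun y => Rmin 1 (f y)) x.
Proof.
  intros Hf eps He. destruct (Hf eps He) as [U [HU Hu]].
  exists U; split; auto. intros y Uy. specialize (Hu y Uy).
  apply Rabs_def1; unfold Rmin; apply Rabs_def2 in Hu; repeat destruct Rle_dec; lra.
Qed.
Lemma cont_scale f c x : 0 < c -> cont_at f x -> cont_at (fun y => f y / c) x.
Proof.
  intros Hc Hf eps He. destruct (Hf (eps * c)) as [U [HU Hu]]. nra.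
  exists U; split; auto. intros y Uy. specialize (Hu y Uy).
  replace (f y / c - f x / c) with ((f y - f x) / c) by (field; lra).
  unfold Rdiv; rewrite Rabs_mult, Rabs_inv, (Rabs_right c) by lra.
  apply Rmult_lt_reg_r with c; auto. rewrite Rmult_assoc, Rinv_l by lra. lra.
Qed.
Lemma cont_const c x : cont_at (fun _ => c) x.
Proof.
  intros eps He; exists (fun _ _ => True); split. apply Q_true.
  intros; rewrite Rminus_eq_0, Rabs_R0; auto.
Qed.

Lemma Q_list (D : (X -> X -> R) -> Prop) l :
  (forall d e, D d -> 0 < e -> Q (strict_ent d e)) ->
  Forall (fun p => D (fst p) /\ 0 < snd p) l ->
  Q (fun x y => Forall (fun p => fst p x y < snd p) l).
Proof.
  intros HD; induction l as [|p l IH]; intros Hl.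
  - apply Q_mono with (fun _ _ => True). apply Q_true. intros; constructor.
  - inversion Hl; subst. destruct H1.
    apply Q_mono with (fun x y => strict_ent (fst p) (snd p) x y /\
                         Forall (fun p => fst p x y < snd p) l).
    apply Q_inter; auto. intros x y [H3 H4]; constructor; auto.
Qed.

End Basics.


Section Chain.
Variable X : Type.
Variable Q : entourage X -> Prop.
Hypothesis HQ : quasi_uniformity Q.
Variable V : nat -> entourage X.
Hypothesis HV : forall n, Q (V n).
Hypothesis HC : forall n, subrel (comp (V (S n)) (V (S n))) (V n).

Definition eqrel : entourage X := fun x y => x = y.

Fixpoint W (K : nat) (j : nat) : entourage X :=
  match K with
  | O => match j with O => eqrel | 1%nat => V O | _ => fun _ _ => True end
  | S K' => if Nat.even j then W K' (Nat.div2 j) else comp (W K' (Nat.div2 j)) (V (S K'))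
  end.

Lemma W_even K j : W (S K) (2 * j) = W K j.
Proof.
  change (W (S K) (2*j)) with (if Nat.even (2*j) then W K (Nat.div2 (2*j)) else comp (W K (Nat.div2 (2*j))) (V (S K))).
  rewrite Nat.even_even, Nat.div2_double. reflexivity.
Qed.
Lemma W_odd K j : W (S K) (S (2 * j)) = comp (W K j) (V (S K)).
Proof.
  change (W (S K) (S (2*j))) with (if Nat.even (S (2*j)) then W K (Nat.div2 (S (2*j))) else comp (W K (Nat.div2 (S (2*j)))) (V (S K))).
  replace (S (2*j)) with (2*j+1)%nat by lia. rewrite Nat.even_odd.
  replace (2*j+1)%nat with (S (2*j)) by lia. rewrite Nat.div2_succ_double. reflexivity.
Qed.
Lemma W_0 K : W K 0 = eqrel.
Proof. induction K; auto. Qed.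

Lemma comp_assoc_sub (A B C : entourage X) : subrel (comp (comp A B) C) (comp A (comp B C)).
Proof. intros x z [y [[u [H1 H2]] H3]]. exists u; split; auto. exists y; auto. Qed.
Lemma comp_mono (A B A' B' : entourage X) : subrel A A' -> subrel B B' -> subrel (comp A B) (comp A' B').
Proof. intros H1 H2 x z [y [? ?]]; exists y; auto. Qed.

Lemma W_step K j : subrel (comp (W K j) (V K)) (W K (S j)).
Proof.
  revert j; induction K as [|K IH]; intros j.
  - destruct j as [|[|j]]; simpl.
    + intros x z [y [Hy Hz]]. unfold eqrel in Hy. subst y. exact Hz.
    + intros x z _; exact I.
    + intros x z _; exact I.
  - destruct (Nat.Even_or_Odd j) as [[i Hi]|[i Hi]]; subst j.
    + rewrite W_even. replace (S (2*i)) with (S (2*i)) by reflexivity. rewrite W_odd.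
      intros x z H; exact H.
    + replace (2*i+1)%nat with (S (2*i)) by lia. rewrite W_odd.
      replace (S (S (2*i))) with (2 * S i)%nat by lia. rewrite W_even.
      intros x z H. apply comp_assoc_sub in H. apply IH.
      revert H; apply comp_mono; [intros ? ? h; exact h|apply HC].
Qed.

Lemma W_mono_S K j : subrel (W K j) (W K (S j)).
Proof. intros x y H. apply W_step. exists y; split; auto. apply (Q_refl X Q HQ); auto. Qed.
Lemma W_mono K j j' : (j <= j')%nat -> subrel (W K j) (W K j').
Proof.
  induction 1. intros ? ? h; exact h.
  intros x y h; apply W_mono_S; auto.
Qed.
Lemma W_refine K n j : W (K + n) (j * 2 ^ n) = W K j.
Proof.
  induction n. rewrite Nat.add_0_r, Nat.mul_1_r; auto.
  rewrite Nat.add_succ_r, Nat.pow_succ_r', <- IHn.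
  replace (j * (2 * 2 ^ n))%nat with (2 * (j * 2 ^ n))%nat by lia.
  apply W_even.
Qed.

Lemma pow2_pos K : 0 < 2 ^ K.
Proof. apply pow_lt; lra. Qed.

Lemma W_cross K j K' j' : INR j' / 2 ^ K' <= INR j / 2 ^ K -> subrel (W K' j') (W K j).
Proof.
  intros H.
  assert (Hn : (j' * 2 ^ K <= j * 2 ^ K')%nat).
  { apply INR_le. rewrite !mult_INR, !pow_INR. simpl (INR 2).
    pose proof (pow2_pos K); pose proof (pow2_pos K').
    apply Rmult_le_compat_r with (r := 2 ^ K * 2 ^ K') in H; [|nra].
    replace (INR j' / 2 ^ K' * (2 ^ K * 2 ^ K')) with (INR j' * 2 ^ K) in H by (field; lra).
    replace (INR j / 2 ^ K * (2 ^ K * 2 ^ K')) with (INR j * 2 ^ K') in H by (field; lra).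
    replace (1+1) with 2 by ring. lra. }
  rewrite <- (W_refine K' K j'), <- (W_refine K K' j).
  rewrite Nat.add_comm. apply W_mono; auto.
Qed.

Lemma W_V0 K j : INR j / 2 ^ K <= 1 -> subrel (W K j) (V 0).
Proof.
  intros H. change (V 0%nat) with (W 0 1). apply W_cross. simpl. lra.
Qed.

Lemma W_one K : subrel (V K) (W K 1).
Proof.
  destruct K. simpl; auto. intros x y h; exact h.
  change 1%nat with (S (2*0)). rewrite W_odd, W_0. intros x y h. exists x; split; auto. reflexivity.
Qed.

End Chain.


Lemma inf_ex (S : R -> Prop) : (exists r, S r) -> (forall r, S r -> 0 <= r) -> {m | is_inf S m}.
Proof.
  intros Hne Hpos.
  destruct (completeness (fun r => S (- r))) as [m [Hub Hl]].
  - exists 0. intros r Sr. apply Hpos in Sr. lra.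
  - destruct Hne as [r Sr]. exists (- r). rewrite Ropp_involutive; auto.
  - exists (- m). split.
    + intros s Ss. assert (- s <= m). apply Hub. rewrite Ropp_involutive; auto. lra.
    + intros l Hlb. assert (m <= - l). apply Hl. intros r Sr. apply Hlb in Sr. lra. lra.
Qed.

Lemma inf_lt (S : R -> Prop) m t : is_inf S m -> m < t -> exists r, S r /\ r < t.
Proof.
  intros [H1 H2] Hmt. apply NNPP; intros N.
  assert (t <= m). apply H2. intros s Ss. apply Rnot_lt_le. intros Hs. apply N; eauto. lra.
Qed.

Lemma pow2_ge n : INR n <= 2 ^ n.
Proof.
  induction n. simpl; lra. rewrite S_INR. simpl.
  assert (1 <= 2 ^ n). { clear IHn. induction n; simpl; lra. } lra.
Qed.

Lemma small_pow eps : 0 < eps -> exists n, 1 / 2 ^ n < eps.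
Proof.
  intros He. destruct (archimed_cor1 eps He) as [N [H1 H2]].
  exists N. pose proof (pow2_ge N). apply lt_0_INR in H2.
  apply Rle_lt_trans with (/ INR N); auto. unfold Rdiv; rewrite Rmult_1_l.
  apply Rinv_le_contravar; auto.
Qed.

Lemma small_pow_ge eps m : 0 < eps -> exists n, (m <= n)%nat /\ 1 / 2 ^ n < eps.
Proof.
  intros He. destruct (small_pow eps He) as [n Hn]. exists (m + n)%nat. split. lia.
  apply Rle_lt_trans with (1 / 2 ^ n); auto.
  unfold Rdiv; rewrite !Rmult_1_l. apply Rinv_le_contravar. apply pow_lt; lra.
  apply Rle_pow. lra. lia.
Qed.

Lemma dyadic_between a b : 0 <= a -> a < b -> exists K j, a < INR j / 2 ^ K < b.
Proof.
  intros Ha Hab. destruct (small_pow (b - a)) as [K HK]. lra.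
  pose proof (pow2_pos K) as HP.
  destruct (archimed (a * 2 ^ K)) as [H1 H2].
  assert (Hz : (0 <= up (a * 2 ^ K))%Z).
  { apply le_IZR. assert (0 <= a * 2 ^ K) by nra. simpl; lra. }
  exists K, (Z.to_nat (up (a * 2 ^ K))).
  rewrite INR_IZR_INZ, Z2Nat.id by auto.
  split.
  - apply Rmult_lt_reg_r with (2 ^ K); auto. unfold Rdiv; rewrite Rmult_assoc, Rinv_l by lra. lra.
  - apply Rmult_lt_reg_r with (2 ^ K); auto. unfold Rdiv; rewrite Rmult_assoc, Rinv_l by lra.
    assert (1 / 2 ^ K * 2 ^ K = 1) by (field; lra).
    assert ((b - a) * 2 ^ K > 1 / 2 ^ K * 2 ^ K) by (apply Rmult_lt_compat_r; lra).
    nra.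
Qed.

Section Rho.
Variable X : Type.
Variable Q : entourage X -> Prop.
Hypothesis HQ : quasi_uniformity Q.
Variable V : nat -> entourage X.
Hypothesis HV : forall n, Q (V n).
Hypothesis HC : forall n, subrel (comp (V (S n)) (V (S n))) (V n).

Definition Sset (x y : X) (r : R) : Prop :=
  r = 1 \/ exists K j, r = INR j / 2 ^ K /\ closure Q (ball x (W X V K j)) y.

Lemma Sset_ne x y : exists r, Sset x y r.
Proof. exists 1; left; auto. Qed.
Lemma Sset_pos x y r : Sset x y r -> 0 <= r.
Proof.
  intros [->|[K [j [-> _]]]]. lra.
  pose proof (pow2_pos K). pose proof (pos_INR j). unfold Rdiv.
  apply Rmult_le_pos; auto. left; apply Rinv_0_lt_compat; auto.
Qed.

Definition rho (x y : X) : R := proj1_sig (inf_ex (Sset x y) (Sset_ne x y) (Sset_pos x y)).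

Lemma rho_inf x y : is_inf (Sset x y) (rho x y).
Proof. unfold rho; destruct inf_ex; auto. Qed.
Lemma rho_le x y r : Sset x y r -> rho x y <= r.
Proof. intros; apply (proj1 (rho_inf x y)); auto. Qed.
Lemma rho_ge0 x y : 0 <= rho x y.
Proof. apply (proj2 (rho_inf x y)). apply Sset_pos. Qed.
Lemma rho_le1 x y : rho x y <= 1.
Proof. apply rho_le; left; auto. Qed.
Lemma rho_lt x y t : rho x y < t -> exists r, Sset x y r /\ r < t.
Proof. apply inf_lt, rho_inf. Qed.
Lemma rho_xx x : rho x x = 0.
Proof.
  apply Rle_antisym; [|apply rho_ge0]. apply rho_le. right. exists 0%nat, 0%nat.
  split. simpl; lra. apply closure_incl. reflexivity.
Qed.
Lemma rho_V K x y : V K x y -> rho x y <= 1 / 2 ^ K.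
Proof.
  intros H. apply rho_le. right. exists K, 1%nat. split. simpl; lra.
  apply closure_incl. apply W_one; auto.
Qed.
Lemma rho_lt1 x y : rho x y < 1 -> closure Q (ball x (V 0%nat)) y.
Proof.
  intros H. destruct (rho_lt _ _ _ H) as [r [[->|[K [j [-> Hc]]]] Hr]]. lra.
  revert Hc; apply closure_mono. intros z; apply (W_V0 X Q HQ V HV HC K j). lra.
Qed.

Lemma rho_lsc x y t : t < rho x y -> exists U, Q U /\ forall z, U y z -> t < rho x z.
Proof.
  intros Ht. destruct (Rlt_or_le t 0) as [Hn|Hp].
  - exists (fun _ _ => True); split. apply Q_true; auto. intros; pose proof (rho_ge0 x z); lra.
  - destruct (dyadic_between t (rho x y)) as [K [j [H1 H2]]]; auto.
    assert (Hnc : ~ closure Q (ball x (W X V K j)) y).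
    { intros C. assert (rho x y <= INR j / 2 ^ K). apply rho_le; right; eauto. lra. }
    destruct (not_closure_ball X Q _ _ Hnc) as [U [HU Hu]].
    exists U; split; auto. intros z Uz.
    apply Rlt_le_trans with (INR j / 2 ^ K); auto.
    apply (proj2 (rho_inf x z)). intros r [->|[K' [j' [-> Hc]]]].
    + pose proof (rho_le1 x y); lra.
    + apply Rnot_lt_le; intros Hl. apply (Hu z Uz). revert Hc; apply closure_mono.
      intros w; apply (W_cross X Q HQ V HV HC). lra.
Qed.

End Rho.


Lemma frac_eq b K n : INR (b * 2 ^ n) / 2 ^ (K + n) = INR b / 2 ^ K.
Proof.
  rewrite mult_INR, pow_INR, pow_add. simpl (INR 2). replace (1+1) with 2 by ring.
  pose proof (pow2_pos K); pose proof (pow2_pos n). field; lra.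
Qed.
Lemma frac_mono a c K : (c <= a)%nat -> INR c / 2 ^ K <= INR a / 2 ^ K.
Proof.
  intros H. apply le_INR in H. pose proof (pow2_pos K).
  unfold Rdiv; apply Rmult_le_compat_r; auto. left; apply Rinv_0_lt_compat; auto.
Qed.
Lemma frac_add a b K : INR (a + b) / 2 ^ K = INR a / 2 ^ K + INR b / 2 ^ K.
Proof. rewrite plus_INR. pose proof (pow2_pos K). field; lra. Qed.
Lemma frac_pow n K : INR (2 ^ n) / 2 ^ (K + n) = 1 / 2 ^ K.
Proof. replace (2 ^ n)%nat with (1 * 2 ^ n)%nat by lia. rewrite frac_eq. simpl; auto. Qed.
Lemma frac_lt_nat a K t : t <= 1 -> INR a / 2 ^ K < t -> (a < 2 ^ K)%nat.
Proof.
  intros Ht H. apply INR_lt. rewrite pow_INR. simpl (INR 2). replace (1+1) with 2 by ring.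
  pose proof (pow2_pos K).
  apply Rmult_lt_compat_r with (r := 2 ^ K) in H; auto.
  replace (INR a / 2 ^ K * 2 ^ K) with (INR a) in H by (field; lra). nra.
Qed.

Section RhoMore.
Variable X : Type.
Variable Q : entourage X -> Prop.
Hypothesis HQ : quasi_uniformity Q.
Variable V : nat -> entourage X.
Hypothesis HV : forall n, Q (V n).
Hypothesis HC : forall n, subrel (comp (V (S n)) (V (S n))) (V n).
Variable B : entourage X -> Prop.
Hypothesis HBV : forall n, B (V n).

Lemma comp_eq_l (U : entourage X) : comp (eqrel X) U = U.
Proof.
  apply functional_extensionality; intros x; apply functional_extensionality; intros z.
  apply propositional_extensionality; split.
  - intros [y [Hy Hz]]; unfold eqrel in Hy; subst; auto.
  - intros H; exists x; split; auto. reflexivity.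
Qed.

Lemma W_in_B (HBm : multiplicative B) K j : (1 <= j <= 2 ^ K)%nat -> B (W X V K j).
Proof.
  revert j; induction K as [|K IH]; intros j Hj.
  - simpl in Hj. assert (j = 1%nat) by lia. subst. simpl. auto.
  - destruct (Nat.Even_or_Odd j) as [[i Hi]|[i Hi]]; subst j.
    + rewrite W_even. apply IH. simpl in Hj. lia.
    + replace (2*i+1)%nat with (S (2*i)) by lia. rewrite W_odd.
      destruct i. rewrite W_0, comp_eq_l; auto.
      apply HBm; auto. apply IH. simpl in Hj. lia.
Qed.

Lemma rho_usc (HBm : multiplicative B) (HPR : point_rotund_base Q B) x y t :
  rho X Q V x y < t -> exists U, Q U /\ forall z, U y z -> rho X Q V x z < t.
Proof.
  intros Ht. destruct (Rlt_or_le 1 t) as [H1|H1].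
  { exists (fun _ _ => True); split. apply Q_true; auto. intros; pose proof (rho_le1 X Q V x z); lra. }
  destruct (rho_lt X Q V x y t Ht) as [r [[->|[K [j [-> Hc]]]] Hr]]. lra.
  destruct (small_pow_ge ((t - INR j / 2 ^ K) / 2) K) as [n [Hn Hs]]. lra.
  destruct (Nat.le_exists_sub K n Hn) as [m [Hm _]]. subst n. rewrite Nat.add_comm in Hs.
  set (j2 := (j * 2 ^ m + 1)%nat).
  assert (Hv : INR (S j2) / 2 ^ (K + m) = INR j / 2 ^ K + 2 * (1 / 2 ^ (K + m))).
  { unfold j2. replace (S (j * 2 ^ m + 1)) with (j * 2 ^ m + 2)%nat by lia.
    rewrite frac_add, frac_eq. simpl (INR 2). unfold Rdiv. lra. }
  assert (Hlt : (S j2 < 2 ^ (K + m))%nat). { apply (frac_lt_nat _ _ t); auto. lra. }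
  assert (HB2 : B (W X V (K + m) j2)). { apply W_in_B; auto. unfold j2 in *. lia. }
  assert (Hy : closure Q (ball x (W X V (K + m) j2)) y).
  { revert Hc; apply closure_mono. intros w. rewrite <- (W_refine X V K m j).
    apply (W_mono X Q HQ V HV HC). unfold j2; lia. }
  destruct (interior_ball X Q _ _ (HPR x (V (K + m)%nat) _ (HBV _) HB2 y Hy)) as [U [HU Hu]].
  exists U; split; auto. intros z Uz.
  apply Rle_lt_trans with (INR (S j2) / 2 ^ (K + m)).
  - apply rho_le. right. exists (K + m)%nat, (S j2). split; auto.
    revert Hu; intros Hu. specialize (Hu z Uz). revert Hu. apply closure_mono.
    intros w. apply (W_step X V HC).
  - rewrite Hv. lra.
Qed.

Lemma level_approx z x K0 j0 K : closure Q (ball z (W X V K0 j0)) x ->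
  exists j, closure Q (ball z (W X V K j)) x /\ INR j / 2 ^ K <= INR j0 / 2 ^ K0 + 1 / 2 ^ K.
Proof.
  intros Hc. destruct (le_lt_dec K0 K) as [Hle|Hlt].
  - destruct (Nat.le_exists_sub K0 K Hle) as [n [Hn _]]. subst K. rewrite Nat.add_comm.
    exists (j0 * 2 ^ n)%nat. rewrite W_refine, frac_eq. split; auto.
    pose proof (pow2_pos (K0 + n)). assert (0 < 1 / 2 ^ (K0 + n)). unfold Rdiv; rewrite Rmult_1_l; apply Rinv_0_lt_compat; auto. lra.
  - destruct (Nat.le_exists_sub (S K) K0 Hlt) as [n [Hn _]].
    replace (n + S K)%nat with (K + S n)%nat in Hn by lia. subst K0.
    set (q := (2 ^ S n)%nat).
    assert (Hq : (0 < q)%nat). { unfold q. apply Nat.neq_0_lt_0, Nat.pow_nonzero. lia. }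
    pose proof (Nat.div_mod j0 q ltac:(lia)). pose proof (Nat.mod_upper_bound j0 q ltac:(lia)).
    exists (j0 / q + 1)%nat. split.
    + revert Hc; apply closure_mono. intros w. apply (W_cross X Q HQ V HV HC).
      rewrite <- (frac_eq (j0 / q + 1) K (S n)). apply frac_mono. fold q. nia.
    + rewrite <- (frac_eq (j0 / q + 1) K (S n)). fold q.
      rewrite <- (frac_pow (S n) K). fold q. rewrite <- frac_add. apply frac_mono. nia.
Qed.

Lemma rho_shift (HR : rotund_base Q B) K x y z :
  V (S K) x y -> rho X Q V z y <= rho X Q V z x + 2 / 2 ^ K.
Proof.
  intros Hxy.
  cut (rho X Q V z y - 2 / 2 ^ K <= rho X Q V z x). lra.
  apply (proj2 (rho_inf X Q V z x)). intros r [->|[K0 [j0 [-> Hc]]]].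
  - pose proof (rho_le1 X Q V z y). pose proof (pow2_pos K).
    assert (0 < 2 / 2 ^ K). unfold Rdiv; apply Rmult_lt_0_compat; [lra|apply Rinv_0_lt_compat; auto]. lra.
  - destruct (level_approx z x K0 j0 K Hc) as [j [Hc2 Hj]].
    assert (Hy : closure Q (ball z (W X V K (S j))) y).
    { pose proof (HR (ball z (W X V K j)) (V (S K)) (V (S K)) (HBV _) (HBV _) y) as H.
      assert (H' : closure Q (ballS (ball z (W X V K j)) (comp (V (S K)) (V (S K)))) y).
      { apply H. exists x; split; auto. }
      revert H'. apply closure_mono. intros w [a [Ha Haw]].
      apply (W_step X V HC). exists a; split; auto. apply HC; auto. }
    assert (rho X Q V z y <= INR (S j) / 2 ^ K). { apply rho_le. right. eauto. }
    rewrite S_INR in H. unfold Rdiv in *. lra.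
Qed.

End RhoMore.


Lemma cont_semi X (Q : entourage X -> Prop) (HQ : quasi_uniformity Q) (f : X -> R) y :
  (forall t, t < f y -> exists U, Q U /\ forall z, U y z -> t < f z) ->
  (forall t, f y < t -> exists U, Q U /\ forall z, U y z -> f z < t) ->
  cont_at X Q f y.
Proof.
  intros H1 H2 eps He.
  destruct (H1 (f y - eps)) as [U1 [HU1 Hu1]]. lra.
  destruct (H2 (f y + eps)) as [U2 [HU2 Hu2]]. lra.
  exists (fun a b => U1 a b /\ U2 a b); split. apply Q_inter; auto.
  intros z [h1 h2]. specialize (Hu1 z h1); specialize (Hu2 z h2).
  apply Rabs_def1; lra.
Qed.

Lemma chain_ex X (Q : entourage X -> Prop) (HQ : quasi_uniformity Q) B (HB : is_base Q B) V0 (HB0 : B V0) :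
  exists V : nat -> entourage X, V 0%nat = V0 /\ (forall n, B (V n)) /\
    forall n, subrel (comp (V (S n)) (V (S n))) (V n).
Proof.
  assert (step : forall U : {U | B U}, {U' : {U | B U} | subrel (comp (proj1_sig U') (proj1_sig U')) (proj1_sig U)}).
  { intros [U HU]. apply constructive_indefinite_description.
    destruct (Q_half X Q HQ U (proj1 HB U HU)) as [W1 [HW1 Hs]].
    destruct (proj2 HB W1 HW1) as [W2 [HW2 Hs2]].
    exists (exist _ W2 HW2). simpl. intros x z [y [h1 h2]]. apply Hs. exists y; split; apply Hs2; auto. }
  set (f := fix f (n : nat) : {U | B U} := match n with O => exist _ V0 HB0 | S n => proj1_sig (step (f n)) end).
  exists (fun n => proj1_sig (f n)). split; [reflexivity|split].
  - intros n; exact (proj2_sig (f n)).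
  - intros n. simpl. exact (proj2_sig (step (f n))).
Qed.

Section Dsup.
Variable X : Type.
Variable Q : entourage X -> Prop.
Hypothesis HQ : quasi_uniformity Q.
Variable V : nat -> entourage X.
Hypothesis HV : forall n, Q (V n).
Hypothesis HC : forall n, subrel (comp (V (S n)) (V (S n))) (V n).
Variable B : entourage X -> Prop.
Hypothesis HBV : forall n, B (V n).
Hypothesis HR : rotund_base Q B.

Let r := rho X Q V.
Definition Tset (x y : X) (v : R) : Prop := exists z, v = Rmax 0 (rho X Q V z y - rho X Q V z x).

Lemma Tset_bound x y : bound (Tset x y).
Proof.
  exists 1. intros v [z ->]. pose proof (rho_le1 X Q V z y); pose proof (rho_ge0 X Q V z x).
  unfold Rmax; destruct Rle_dec; lra.
Qed.
Lemma Tset_ne x y : exists v, Tset x y v.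
Proof. exists (Rmax 0 (rho X Q V x y - rho X Q V x x)); exists x; auto. Qed.

Definition dsup (x y : X) : R := proj1_sig (completeness _ (Tset_bound x y) (Tset_ne x y)).

Lemma dsup_lub x y : is_lub (Tset x y) (dsup x y).
Proof. unfold dsup; destruct completeness; auto. Qed.
Lemma dsup_ge x y z : Rmax 0 (rho X Q V z y - rho X Q V z x) <= dsup x y.
Proof. apply (proj1 (dsup_lub x y)). exists z; auto. Qed.
Lemma dsup_le x y c : (forall z, Rmax 0 (rho X Q V z y - rho X Q V z x) <= c) -> dsup x y <= c.
Proof. intros H. apply (proj2 (dsup_lub x y)). intros v [z ->]; auto. Qed.

Lemma dsup_ge0 x y : 0 <= dsup x y.
Proof. eapply Rle_trans; [|apply (dsup_ge x y x)]. apply Rmax_l. Qed.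
Lemma dsup_xx x : dsup x x = 0.
Proof.
  apply Rle_antisym; [|apply dsup_ge0]. apply dsup_le. intros z.
  rewrite Rminus_diag. unfold Rmax; destruct Rle_dec; lra.
Qed.
Lemma dsup_tri x y z : dsup x z <= dsup x y + dsup y z.
Proof.
  apply dsup_le. intros w. pose proof (dsup_ge x y w); pose proof (dsup_ge y z w).
  revert H H0. unfold Rmax; repeat destruct Rle_dec; lra.
Qed.
Lemma dsup_rho x y : rho X Q V x y <= dsup x y.
Proof.
  pose proof (dsup_ge x y x). rewrite rho_xx in H. revert H. unfold Rmax; destruct Rle_dec; lra.
Qed.
Lemma dsup_shift K x y y' : V (S K) y y' -> dsup x y' <= dsup x y + 2 / 2 ^ K.
Proof.
  intros Hy. apply dsup_le. intros z. pose proof (dsup_ge x y z).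
  pose proof (rho_shift X Q HQ V HV HC B HBV HR K y y' z Hy).
  pose proof (pow2_pos K). assert (0 < 2 / 2 ^ K) by (unfold Rdiv; apply Rmult_lt_0_compat; [lra|apply Rinv_0_lt_compat; auto]).
  revert H H0. unfold Rmax; repeat destruct Rle_dec; lra.
Qed.
Lemma dsup_small K x y : V (S K) x y -> dsup x y <= 2 / 2 ^ K.
Proof. intros H. pose proof (dsup_shift K x x y H). rewrite dsup_xx in H0. lra. Qed.

Lemma two_pow eps : 0 < eps -> exists K, 2 / 2 ^ K < eps.
Proof.
  intros He. destruct (small_pow (eps / 2)) as [K HK]. lra. exists K.
  unfold Rdiv in *. lra.
Qed.

Lemma dsup_uniform : uniform_premetric Q dsup.
Proof.
  intros e He. destruct (two_pow e He) as [K HK].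
  apply Q_mono with (V (S K)); auto. intros x y H. unfold strict_ent.
  pose proof (dsup_small K x y H). lra.
Qed.

Lemma dsup_rc : right_continuous Q dsup.
Proof.
  intros x. apply qcont_iff; auto. intros y. apply cont_semi; auto.
  - intros t Ht. destruct (Rlt_or_le t 0) as [Hn|Hp].
    { exists (fun _ _ => True); split. apply Q_true; auto. intros; pose proof (dsup_ge0 x z); lra. }
    assert (Hex : exists z, t < Rmax 0 (rho X Q V z y - rho X Q V z x)).
    { apply NNPP; intros N. assert (dsup x y <= t). apply dsup_le. intros z. apply Rnot_lt_le. intros h; apply N; eauto. lra. }
    destruct Hex as [z Hz].
    assert (Hz' : t + rho X Q V z x < rho X Q V z y). { revert Hz; unfold Rmax; destruct Rle_dec; lra. }
    destruct (rho_lsc X Q HQ V HV HC z y _ Hz') as [U [HU Hu]].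
    exists U; split; auto. intros y' Uy. specialize (Hu y' Uy).
    pose proof (dsup_ge x y' z). revert H. unfold Rmax; destruct Rle_dec; lra.
  - intros t Ht. destruct (two_pow (t - dsup x y)) as [K HK]. lra.
    exists (V (S K)); split; auto. intros y' Hy. pose proof (dsup_shift K x y y' Hy). lra.
Qed.

Lemma dsup_qpm : quasi_pseudometric dsup.
Proof. split. split. apply dsup_ge0. apply dsup_xx. apply dsup_tri. Qed.

End Dsup.

Lemma distbar_gen X (Q : entourage X -> Prop) (HQ : quasi_uniformity Q) (d : X -> X -> R)
  (Hd : quasi_pseudometric d) (Hu : uniform_premetric Q d)
  B (HB : is_base Q B) (HR : rotund_base Q B) : distbar_continuous Q d.
Proof.
  intros A _ f Hf. apply qcont_iff; auto. intros x eps He.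
  destruct Hd as [[Hd0 Hdxx] Htri].
  assert (Hf0 : forall z, 0 <= f z).
  { intros z. apply (proj2 (Hf z)). intros s [hs _]. lra. }
  destruct (inf_lt _ _ (f x + eps / 2) (Hf x)) as [e [[He0 Hce] Hel]]. lra.
  destruct (Q_half X Q HQ _ (Hu (eps / 4) ltac:(lra))) as [W1 [HW1 Hs1]].
  destruct (proj2 HB W1 HW1) as [U0 [HU0 Hs0]].
  assert (Hup : forall z, U0 x z -> f z < f x + eps).
  { intros z Hz.
    assert (Hcz : closure Q (dballS d A (e + eps / 4)) z).
    { pose proof (HR (dballS d A e) U0 U0 HU0 HU0 z) as H.
      assert (H' : closure Q (ballS (dballS d A e) (comp U0 U0)) z).
      { apply H. exists x; split; auto. }
      revert H'. apply closure_mono. intros w [a [[a0 [Ha0 Hda]] Haw]].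
      exists a0; split; auto.
      assert (d a w < eps / 4).
      { apply Hs1. destruct Haw as [m [h1 h2]]. exists m; split; apply Hs0; auto. }
      pose proof (Htri a0 a w). lra. }
    assert (f z <= e + eps / 4). { apply (proj1 (Hf z)). split; auto. lra. }
    lra. }
  destruct (Rlt_or_le (f x) eps) as [Hsm|Hbig].
  - exists U0; split. apply (proj1 HB); auto. intros z Hz. specialize (Hup z Hz). specialize (Hf0 z).
    apply Rabs_def1; lra.
  - set (s := f x - eps / 2).
    assert (Hnc : ~ closure Q (dballS d A s) x).
    { intros C. assert (f x <= s). apply (proj1 (Hf x)). split; auto. unfold s; lra. unfold s in *; lra. }
    destruct (not_closure_ball X Q _ _ Hnc) as [U [HU Hun]].
    exists (fun a b => U0 a b /\ U a b); split. apply Q_inter; auto. apply (proj1 HB); auto.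
    intros z [h0 h1]. specialize (Hup z h0).
    assert (s <= f z).
    { apply (proj2 (Hf z)). intros e' [He' Hc']. apply Rnot_lt_le; intros Hl.
      apply (Hun z h1). revert Hc'; apply closure_mono. intros w [a [Ha Hda]]. exists a; split; auto. lra. }
    unfold s in *. apply Rabs_def1; lra.
Qed.


Section Main.
Variable X : Type.
Variable Q : entourage X -> Prop.
Hypothesis HQ : quasi_uniformity Q.

Lemma interior_mono (S T : X -> Prop) x : (forall y, S y -> T y) -> interior Q S x -> interior Q T x.
Proof. intros H [W [HW [Wx Hs]]]. exists W; repeat split; auto. intros y Wy; apply H, Hs; auto. Qed.

Lemma semi_to_reg : point_rotund Q -> uniformly_semiregular Q -> uniformly_regular Q.
Proof.
  intros [B [HB [HBm HPR]]] Hs U HU.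
  destruct (Hs U HU) as [V1 [HV1 Hv1]].
  destruct (Q_half X Q HQ V1 HV1) as [V2 [HV2 Hv2]].
  destruct (proj2 HB V2 HV2) as [V [HBV Hv]].
  exists V; split. apply (proj1 HB); auto.
  intros x y Hy. apply Hv1. specialize (HPR x V V HBV HBV y Hy).
  revert HPR. apply interior_mono. intros z. apply closure_mono. intros w [m [h1 h2]].
  apply Hv2. exists m; split; apply Hv; auto.
Qed.

Lemma reg_to_semi : uniformly_regular Q -> uniformly_semiregular Q.
Proof.
  intros Hr U HU. destruct (Hr U HU) as [V [HV Hv]]. exists V; split; auto.
  intros x y [W [HW [Wy Hs]]]. apply Hv, Hs; auto.
Qed.

Lemma ucr_to_reg : uniformly_completely_regular Q -> uniformly_regular Q.
Proof.
  intros Hu U HU. destruct (Hu U HU) as [d [[Hd0 Hdxx] [Hd1 [Hun [Hrc Hball]]]]].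
  exists (strict_ent d (1/2)); split. apply Hun; lra.
  intros x y Hy. apply Hball. unfold dball.
  apply Rle_lt_trans with (1/2); [|lra]. apply Rnot_lt_le; intros Hgt.
  assert (HO : openR (fun r => 1/2 < r)).
  { intros r Hr. exists (r - 1/2); split. lra. intros s Hs. apply Rabs_def2 in Hs. lra. }
  destruct (Hy _ (Hrc x _ HO) Hgt) as [z [Hz1 Hz2]]. unfold ball, strict_ent in Hz2. lra.
Qed.

Lemma reg_to_ucr : point_rotund Q -> uniformly_regular Q -> uniformly_completely_regular Q.
Proof.
  intros [B [HB [HBm HPR]]] Hr U HU.
  destruct (Hr U HU) as [V' [HV' Hv']].
  destruct (proj2 HB V' HV') as [V0 [HB0 Hv0]].
  destruct (chain_ex X Q HQ B HB V0 HB0) as [V [HV0 [HBV HC]]].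
  assert (HV : forall n, Q (V n)). { intros n; apply (proj1 HB); auto. }
  exists (rho X Q V). split; [split|split; [|split; [|split]]].
  - apply rho_ge0.
  - apply rho_xx; auto.
  - apply rho_le1.
  - intros e He. destruct (small_pow e He) as [K HK].
    apply (Q_mono X Q HQ (V K)); auto. intros x y H. unfold strict_ent.
    pose proof (rho_V X Q V K x y H). lra.
  - intros x. apply qcont_iff; auto. intros y. apply cont_semi; auto.
    + intros t Ht. apply (rho_lsc X Q HQ V HV HC); auto.
    + intros t Ht. apply (rho_usc X Q HQ V HV HC B HBV HBm HPR); auto.
  - intros x y Hy. apply Hv'. apply (rho_lt1 X Q HQ V HV HC) in Hy.
    rewrite HV0 in Hy. revert Hy; apply closure_mono. intros z; apply Hv0.
Qed.

Lemma Q_scaled (D : (X -> X -> R) -> Prop) l c :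
  (forall d e, D d -> 0 < e -> Q (strict_ent d e)) -> 0 < c ->
  Forall (fun p => D (fst p) /\ 0 < snd p) l ->
  Q (fun x y => Forall (fun p => fst p x y < snd p * c) l).
Proof.
  intros HD Hc; induction l as [|p l IH]; intros Hl.
  - apply (Q_mono X Q HQ (fun _ _ => True)). apply Q_true; auto. intros; constructor.
  - inversion Hl; subst. destruct H1.
    apply (Q_mono X Q HQ (fun x y => strict_ent (fst p) (snd p * c) x y /\
                         Forall (fun p => fst p x y < snd p * c) l)).
    apply (Q_inter X Q HQ (strict_ent (fst p) (snd p * c)) (fun x y => Forall (fun p => fst p x y < snd p * c) l)); auto. apply HD; auto. nra. intros x y [H3 H4]; constructor; auto.
Qed.

Definition Fl (l : list ((X -> X -> R) * R)) (x y : X) : R :=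
  fold_right (fun p acc => Rmax (fst p x y / snd p) acc) 0 l.

Section FlProps.
Variable D : (X -> X -> R) -> Prop.
Hypothesis HD : forall d, D d -> premetric d /\ right_continuous Q d.

Lemma Fl_ge0 l x y : 0 <= Fl l x y.
Proof. induction l; simpl. lra. eapply Rle_trans; [apply IHl|apply Rmax_r]. Qed.
Lemma Fl_xx l x : Forall (fun p => D (fst p) /\ 0 < snd p) l -> Fl l x x = 0.
Proof.
  induction 1; simpl; auto. rewrite IHForall. destruct H as [H1 H2].
  rewrite (proj2 (proj1 (HD _ H1))). unfold Rdiv; rewrite Rmult_0_l. unfold Rmax; destruct Rle_dec; lra.
Qed.
Lemma Fl_lt l x y c : Forall (fun p => D (fst p) /\ 0 < snd p) l -> Fl l x y < c ->
  Forall (fun p => fst p x y < snd p * c) l.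
Proof.
  induction 1; simpl; intros H1; constructor.
  - destruct H as [_ He]. assert (fst x0 x y / snd x0 < c).
    { eapply Rle_lt_trans; [apply Rmax_l|apply H1]. }
    apply Rmult_lt_compat_r with (r := snd x0) in H; auto.
    unfold Rdiv in H; rewrite Rmult_assoc, Rinv_l in H by lra. lra.
  - apply IHForall. eapply Rle_lt_trans; [apply Rmax_r|apply H1].
Qed.
Lemma Fl_lt_rev l x y c : 0 < c -> Forall (fun p => D (fst p) /\ 0 < snd p) l ->
  Forall (fun p => fst p x y < snd p * c) l -> Fl l x y < c.
Proof.
  intros Hc. induction 1; simpl; intros H1; auto. inversion H1; subst.
  apply Rmax_lub_lt; auto. destruct H as [_ He].
  apply Rmult_lt_reg_r with (snd x0); auto. unfold Rdiv; rewrite Rmult_assoc, Rinv_l by lra. lra.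
Qed.
Lemma Fl_cont l x y : Forall (fun p => D (fst p) /\ 0 < snd p) l -> cont_at X Q (fun z => Fl l x z) y.
Proof.
  induction 1; simpl. apply cont_const; auto.
  apply cont_max; auto. destruct H as [H1 H2]. apply cont_scale; auto.
  apply qcont_iff; auto. apply (proj2 (HD _ H1)).
Qed.
End FlProps.

Lemma gen_uniform D : generates Q D -> forall d e, D d -> 0 < e -> Q (strict_ent d e).
Proof.
  intros Hg d e Hd He. apply (proj2 (Hg _)). exists ((d, e) :: nil). split.
  constructor; auto. intros x y H; inversion H; subst; auto.
Qed.

Lemma ucr_to_gen : uniformly_completely_regular Q ->
  exists D : (X -> X -> R) -> Prop,
    (forall d, D d -> premetric d /\ right_continuous Q d) /\ generates Q D.
Proof.
  intros Hu. exists (fun d => premetric d /\ right_continuous Q d /\ uniform_premetric Q d).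
  split. intros d [h1 [h2 h3]]; auto.
  intros W; split.
  - intros HW. destruct (Hu W HW) as [d [Hp [_ [Hun [Hrc Hb]]]]].
    exists ((d, 1) :: nil). split. constructor; auto. split; auto. simpl; lra.
    intros x y H; inversion H; subst. apply Hb; auto.
  - intros [l [Hl Hw]]. apply (Q_mono X Q HQ (fun x y => Forall (fun p => fst p x y < snd p) l)); auto.
    apply Q_list with (fun d => premetric d /\ right_continuous Q d /\ uniform_premetric Q d); auto.
    intros d e [_ [_ h]] He; apply h; auto.
Qed.

Lemma gen_to_ucr D : (forall d, D d -> premetric d /\ right_continuous Q d) -> generates Q D ->
  uniformly_completely_regular Q.
Proof.
  intros HD Hg U HU. destruct (proj1 (Hg U) HU) as [l [Hl Hw]].
  exists (fun x y => Rmin 1 (Fl l x y)). split; [split|split; [|split; [|split]]].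
  - intros x y. apply Rmin_glb. lra. apply Fl_ge0.
  - intros x. rewrite (Fl_xx D HD); auto. apply Rmin_right; lra.
  - intros; apply Rmin_l.
  - intros e He. apply (Q_mono X Q HQ (fun x y => Forall (fun p => fst p x y < snd p * e) l)).
    apply Q_scaled with D; auto. apply gen_uniform; auto.
    intros x y H. unfold strict_ent. eapply Rle_lt_trans; [apply Rmin_r|]. apply (Fl_lt_rev D); auto.
  - intros x. apply qcont_iff; auto. intros y. apply cont_min1; auto. apply (Fl_cont D); auto.
  - intros x y Hy. unfold dball in Hy. apply Hw.
    assert (Fl l x y < 1). { revert Hy; unfold Rmin; destruct Rle_dec; lra. }
    pose proof (Fl_lt D l x y 1 Hl H). revert H0. apply Forall_impl. intros a; lra.
Qed.

End Main.


Module ZZ.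
From mathcomp Require Import ssreflect ssrbool ssrfun eqtype choice classical_sets boolp.
Local Open Scope classical_set_scope.
Lemma zorn_sets (T:Type) (P : (T -> Prop) -> Prop):
 (forall F : (T->Prop) -> Prop, (forall A, F A -> P A) ->
   (forall A B, F A -> F B -> (forall x, A x -> B x) \/ (forall x, B x -> A x)) ->
   P (fun x => exists A, F A /\ A x)) ->
 exists A, P A /\ forall B, (forall x, A x -> B x) -> P B -> forall x, B x -> A x.
Proof.
move=> H.
have [|A [PA Am]] := @Zorn_bigcup T P.
  move=> F FP Ft. have := H F FP Ft.
  have -> : (fun x => exists A, F A /\ A x) = \bigcup_(X in F) X.
    by apply/funext => x; apply/propext; split => [[A [FA Ax]]|[A FA Ax]]; exists A.
  done.
exists A; split => // B AB PB x Bx.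
apply: contrapT => nAx; apply: (Am B) => //; split => //.
by move=> /(_ x Bx).
Qed.
End ZZ.

Lemma min_family (I A : Type) (i0 : I) (F : I -> A -> Prop) :
  exists i, forall j, exists f : {a | F i a} -> {a | F j a}, forall a b, f a = f b -> a = b.
Proof.
  set (Tup := {t : forall i : I, A | forall i, F i (t i)}).
  set (Adm := fun (S : Tup -> Prop) => forall i (s1 s2 : Tup), S s1 -> S s2 ->
                 proj1_sig s1 i = proj1_sig s2 i -> s1 = s2).
  destruct (ZZ.zorn_sets Tup Adm) as [S0 [HA Hmax]].
  { intros Fam HF Htot i s1 s2 [A1 [HA1 h1]] [A2 [HA2 h2]] He.
    destruct (Htot A1 A2 HA1 HA2) as [H|H].
    - apply (HF A2 HA2 i); auto.
    - apply (HF A1 HA1 i); auto. }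
  assert (Hsurj : exists i, forall a, F i a -> exists s : Tup, S0 s /\ proj1_sig s i = a).
  { apply NNPP; intros N.
    assert (H : forall i, exists a, F i a /\ forall s : Tup, S0 s -> proj1_sig s i <> a).
    { intros i. apply NNPP; intros N2. apply N. exists i. intros a Fa.
      apply NNPP; intros N3. apply N2. exists a; split; auto.
      intros s Ss E. apply N3. exists s; auto. }
    set (g := fun i => proj1_sig (constructive_indefinite_description _ (H i))).
    assert (Hg : forall i, F i (g i) /\ forall s : Tup, S0 s -> proj1_sig s i <> g i).
    { intros i. unfold g. destruct constructive_indefinite_description; auto. }
    set (t := exist (fun t => forall i, F i (t i)) g (fun i => proj1 (Hg i)) : Tup).
    assert (HB : Adm (fun s => S0 s \/ s = t)).
    { intros i s1 s2 [h1|h1] [h2|h2] He.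
      - apply (HA i); auto.
      - subst s2. exfalso. apply (proj2 (Hg i) s1 h1). rewrite He. reflexivity.
      - subst s1. exfalso. apply (proj2 (Hg i) s2 h2). rewrite <- He. reflexivity.
      - subst; auto. }
    assert (S0 t). { apply (Hmax _ (fun s h => or_introl h) HB t). right; auto. }
    apply (proj2 (Hg i0) t H0). reflexivity. }
  destruct Hsurj as [i Hs]. exists i. intros j.
  assert (pick : forall a : {a | F i a}, {s : Tup | S0 s /\ proj1_sig s i = proj1_sig a}).
  { intros a. apply constructive_indefinite_description. apply Hs. exact (proj2_sig a). }
  exists (fun a => exist (fun b => F j b) (proj1_sig (proj1_sig (pick a)) j) (proj2_sig (proj1_sig (pick a)) j)).
  intros a b H. apply (f_equal (@proj1_sig _ _)) in H. simpl in H.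
  destruct (pick a) as [sa [Sa Ea]]. destruct (pick b) as [sb [Sb Eb]]. simpl in H.
  assert (sa = sb) by (apply (HA j); auto). subst sb.
  destruct a as [a Pa]; destruct b as [b Pb]. simpl in *. subst a b.
  f_equal. apply proof_irrelevance.
Qed.

Section Five.
Variable X : Type.
Variable Q : entourage X -> Prop.
Hypothesis HQ : quasi_uniformity Q.

Lemma reg_to_5 : rotund Q -> uniformly_regular Q ->
  exists D : (X -> X -> R) -> Prop,
    (forall d, D d -> quasi_pseudometric d /\ right_continuous Q d /\ distbar_continuous Q d) /\
    generates Q D /\ card_le_chi Q D.
Proof.
  intros [Br [HBr [HBm HR]]] Hr.
  assert (HQb : is_base Q Q). { split; auto. intros U HU; exists U; split; auto. intros ? ? h; exact h. }
  destruct (min_family {B | is_base Q B} (entourage X) (exist _ Q HQb) (fun i => proj1_sig i)) as [[B0 HB0] Hmin].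
  simpl in Hmin.
  assert (Hch : forall b, exists V : nat -> entourage X, Q b ->
     (forall n, Br (V n)) /\ (forall n, subrel (comp (V (S n)) (V (S n))) (V n)) /\
     (forall x, subset (closure Q (ball x (V 0%nat))) (ball x b))).
  { intros b. destruct (classic (Q b)) as [Hb|Hb].
    - destruct (Hr b Hb) as [V' [HV' Hv']]. destruct (proj2 HBr V' HV') as [V0 [HV0 Hv0]].
      destruct (chain_ex X Q HQ Br HBr V0 HV0) as [V [E [HV HC]]].
      exists V; intros _; split; auto; split; auto. intros x y Hy. apply Hv'.
      rewrite E in Hy. revert Hy; apply closure_mono. intros z; apply Hv0.
    - exists (fun _ _ _ => True); intros h; contradiction. }
  set (Vof := fun b => proj1_sig (constructive_indefinite_description _ (Hch b))).
  assert (HVof : forall b, Q b -> (forall n, Br (Vof b n)) /\ (forall n, subrel (comp (Vof b (S n)) (Vof b (S n))) (Vof b n)) /\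
     (forall x, subset (closure Q (ball x (Vof b 0%nat))) (ball x b))).
  { intros b Hb. unfold Vof. destruct constructive_indefinite_description; simpl; auto. }
  set (dfun := fun b => dsup X Q (Vof b)).
  assert (Hprops : forall b, Q b -> quasi_pseudometric (dfun b) /\ right_continuous Q (dfun b) /\
     uniform_premetric Q (dfun b) /\ (forall x y, dfun b x y < 1 -> b x y)).
  { intros b Hb. destruct (HVof b Hb) as [HBV [HC Hcl]].
    assert (HV : forall n, Q (Vof b n)). { intros n; apply (proj1 HBr); auto. }
    split; [apply dsup_qpm|split; [apply (dsup_rc X Q HQ (Vof b) HV HC Br HBV HR)|split; [apply (dsup_uniform X Q HQ (Vof b) HV HC Br HBV HR)|]]].
    intros x y H. apply (Hcl x). apply (rho_lt1 X Q HQ (Vof b) HV HC).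
    pose proof (dsup_rho X Q (Vof b) x y). unfold dfun in H. lra. }
  exists (fun d => exists b, B0 b /\ d = dfun b). split; [|split].
  - intros d [b [Hb ->]]. assert (Qb : Q b) by (apply (proj1 HB0); auto).
    destruct (Hprops b Qb) as [h1 [h2 [h3 _]]]. split; auto. split; auto.
    apply (distbar_gen X Q HQ _ h1 h3 Br HBr HR).
  - intros W; split.
    + intros HW. destruct (proj2 HB0 W HW) as [b [Hb Hbw]].
      exists ((dfun b, 1) :: nil). split. constructor; auto. split. exists b; auto. simpl; lra.
      intros x y H. inversion H; subst. apply Hbw. apply (proj2 (proj2 (proj2 (Hprops b (proj1 HB0 b Hb))))); auto.
    + intros [l [Hl Hw]].
      apply (Q_mono X Q HQ (fun x y => Forall (fun p => fst p x y < snd p) l)); auto.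
      apply (Q_list X Q HQ (fun d => exists b, B0 b /\ d = dfun b)); auto.
      intros d e [b [Hb ->]] He. apply (proj1 (proj2 (proj2 (Hprops b (proj1 HB0 b Hb))))); auto.
  - intros B HB. destruct (Hmin (exist _ B HB)) as [f Hf]. simpl in f, Hf.
    assert (pick : forall d : {d | exists b, B0 b /\ d = dfun b}, {b | B0 b /\ proj1_sig d = dfun b}).
    { intros d. apply constructive_indefinite_description. exact (proj2_sig d). }
    exists (fun d => f (exist _ (proj1_sig (pick d)) (proj1 (proj2_sig (pick d))))).
    intros a b H. apply Hf in H. apply (f_equal (@proj1_sig _ _)) in H. simpl in H.
    destruct (pick a) as [ba [Ba Ea]]. destruct (pick b) as [bb [Bb Eb]]. simpl in H. subst bb.
    destruct a as [a Pa]; destruct b as [b Pb]. simpl in *. subst a b. f_equal. apply proof_irrelevance.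
Qed.

End Five.

Theorem theorem3p4 (X : Type) (Q : (X -> X -> Prop) -> Prop) :
  quasi_uniformity Q -> point_rotund Q ->
  (uniformly_semiregular Q <-> uniformly_regular Q) /\
  (uniformly_regular Q <-> uniformly_completely_regular Q) /\
  (rotund Q ->
     (uniformly_regular Q <->
        exists D : (X -> X -> R) -> Prop,
          (forall d, D d -> premetric d /\ right_continuous Q d) /\
          generates Q D) /\
     (uniformly_regular Q <->
        exists D : (X -> X -> R) -> Prop,
          (forall d, D d -> quasi_pseudometric d /\ right_continuous Q d /\
                            distbar_continuous Q d) /\
          generates Q D /\ card_le_chi Q D)).
Proof.
  intros HQ HPR. split; [|split].
  - split. apply (semi_to_reg X Q HQ HPR). apply reg_to_semi.
  - split. apply (reg_to_ucr X Q HQ HPR). apply (ucr_to_reg X Q).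
  - intros Hrot. split.
    + split.
      * intros Hr. apply (ucr_to_gen X Q HQ). apply (reg_to_ucr X Q HQ HPR Hr).
      * intros [D [HD Hg]]. apply (ucr_to_reg X Q). apply (gen_to_ucr X Q HQ D HD Hg).
    + split.
      * intros Hr. apply (reg_to_5 X Q HQ Hrot Hr).
      * intros [D [HD [Hg _]]]. apply (ucr_to_reg X Q). apply (gen_to_ucr X Q HQ D); auto.
        intros d Hd. destruct (HD d Hd) as [[h1 _] [h2 _]]. auto.
Qed.
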